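(* Let $P^1,\dots,P^4\in\mathbb{R}^n$ be in general position, let $Q^0$ be the equidistant point from $P^1,\dots,P^4$ with barycentric coordinate $\boldsymbol\lambda^0$, and suppose $\lambda^0_1<0$, $\lambda^0_2,\lambda^0_3,\lambda^0_4\ge0$. Let $Q^1=\pi(Q^0|L(P^2,P^3,P^4))$ with barycentric coordinate $\boldsymbol\lambda^1$ about $P^1,\dots,P^4$, and suppose $\lambda^1_2\ge0$, $\lambda^1_3\ge0$, $\lambda^1_4\ge0$. Then the center of the smallest enclosing circle of $P^1,\dots,P^4$ is $Q^\ast=Q^1$ and its radius is $d^\ast=d(P^2,Q^1)$.
   Context: $d$ is the Euclidean distance. Points are in general position if $P^2-P^1,\dots,P^m-P^1$ are linearly independent. $L(S^1,\dots,S^r)$ is the affine subspace spanned by the points; $\pi(Q'|L)$ is the orthogonal projection onto the affine subspace $L$. The barycentric coordinate of $Q\in L(P^1,\dots,P^m)$ is the unique $\boldsymbol\lambda$ with $\sum_i\lambda_i=1$, $Q=\sum_i\lambda_iP^i$. The equidistant point is the unique $Q^0\in L(P^1,\dots,P^m)$ with all $d(P^i,Q^0)$ equal. The smallest enclosing circle has center $Q^\ast$ attaining $\min_Q\max_i d(P^i,Q)$ and radius $d^\ast$ equal to this minimum. *)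

(* Defs.v *)
From HB Require Import structures.
From mathcomp Require Import all_boot all_order all_algebra.
From mathcomp Require Import reals.
Set Implicit Arguments. Unset Strict Implicit. Unset Printing Implicit Defensive.
Import Order.TTheory GRing.Theory Num.Theory.
Local Open Scope ring_scope.

Definition dotv {R : realType} {n : nat} (u v : 'rV[R]_n) : R :=
  \sum_(k < n) u 0 k * v 0 k.
Definition dist {R : realType} {n : nat} (x y : 'rV[R]_n) : R :=
  Num.sqrt (dotv (x - y) (x - y)).

Definition gen_pos {R : realType} {n m : nat} (P : 'I_m.+1 -> 'rV[R]_n) : Prop :=
  row_free (\matrix_(i < m) (P (lift ord0 i) - P ord0)).

Definition is_bary {R : realType} {n m : nat} (S : 'I_m -> 'rV[R]_n)
  (lam : 'I_m -> R) (Q : 'rV[R]_n) : Prop :=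
  \sum_(i < m) lam i = 1 /\ Q = \sum_(i < m) lam i *: S i.

Definition in_aff {R : realType} {n m : nat} (S : 'I_m -> 'rV[R]_n)
  (Q : 'rV[R]_n) : Prop := exists lam, is_bary S lam Q.

Definition is_proj {R : realType} {n m : nat} (S : 'I_m -> 'rV[R]_n)
  (Q0 Q1 : 'rV[R]_n) : Prop :=
  in_aff S Q1 /\ forall X, in_aff S X -> dotv (Q0 - Q1) (X - Q1) = 0.

Definition maxdist {R : realType} {n m : nat} (P : 'I_m -> 'rV[R]_n)
  (Q : 'rV[R]_n) : R := \big[Num.max/0]_(i < m) dist (P i) Q.

Definition is_sec_center {R : realType} {n m : nat} (P : 'I_m -> 'rV[R]_n)
  (Q : 'rV[R]_n) : Prop := forall Q', maxdist P Q <= maxdist P Q'.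

(* indices: p1..p4 stand for the paper's indices 1..4 *)
Definition p1 : 'I_4 := @Ordinal 4 0 isT.
Definition p2 : 'I_4 := @Ordinal 4 1 isT.
Definition p3 : 'I_4 := @Ordinal 4 2 isT.
Definition p4 : 'I_4 := @Ordinal 4 3 isT.

Definition face1 {R : realType} {n : nat} (P : 'I_4 -> 'rV[R]_n) : 'I_3 -> 'rV[R]_n :=
  fun i => P (lift ord0 i).

(* Main.v *)
Require Import Defs.
From HB Require Import structures.
From mathcomp Require Import all_boot all_order all_algebra.
From mathcomp Require Import reals.
From mathcomp Require Import ring lra.
Import Order.TTheory GRing.Theory Num.Theory.
Local Open Scope ring_scope.

Section Dot.
Context {R : realType} {n : nat}.
Implicit Types u v w : 'rV[R]_n.

Lemma dotvC u v : dotv u v = dotv v u.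
Proof. by apply: eq_bigr => k _; rewrite mulrC. Qed.

Lemma dotvDl u v w : dotv (u + v) w = dotv u w + dotv v w.
Proof. by rewrite /dotv -big_split; apply: eq_bigr => k _; rewrite mxE mulrDl. Qed.

Lemma dotvNl u w : dotv (- u) w = - dotv u w.
Proof. by rewrite /dotv -sumrN; apply: eq_bigr => k _; rewrite mxE mulNr. Qed.

Lemma dotvBl u v w : dotv (u - v) w = dotv u w - dotv v w.
Proof. by rewrite dotvDl dotvNl. Qed.

Lemma dotvZl a u w : dotv (a *: u) w = a * dotv u w.
Proof. by rewrite /dotv mulr_sumr; apply: eq_bigr => k _; rewrite mxE mulrA. Qed.

Lemma dotv0l w : dotv 0 w = 0.
Proof. by rewrite /dotv big1 // => k _; rewrite mxE mul0r. Qed.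

Lemma dotvDr u v w : dotv w (u + v) = dotv w u + dotv w v.
Proof. by rewrite !(dotvC w) dotvDl. Qed.

Lemma dotvBr u v w : dotv w (u - v) = dotv w u - dotv w v.
Proof. by rewrite !(dotvC w) dotvBl. Qed.

Lemma dotv_suml m (F : 'I_m -> 'rV[R]_n) w :
  dotv (\sum_(i < m) F i) w = \sum_(i < m) dotv (F i) w.
Proof. exact: (big_morph (fun u => dotv u w) (fun x y => dotvDl x y w) (dotv0l w)). Qed.

Lemma dotv_ge0 u : 0 <= dotv u u.
Proof. by apply: sumr_ge0 => k _; rewrite -expr2 sqr_ge0. Qed.

Lemma dotv_eq0 u : dotv u u = 0 -> u = 0.
Proof.
move=> /eqP; rewrite psumr_eq0 => [/allP H|k _]; last by rewrite -expr2 sqr_ge0.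
apply/matrixP => k0 k; rewrite (ord1 k0) mxE.
have := H k (mem_index_enum k); rewrite /= -expr2 sqrf_eq0 => /eqP.
by [].
Qed.

Lemma dotv_sqD u v : dotv (u + v) (u + v) = dotv u u + dotv v v + 2 * dotv u v.
Proof. rewrite dotvDl !dotvDr (dotvC v u); ring. Qed.

Lemma dotv_sqB u v : dotv (u - v) (u - v) = dotv u u + dotv v v - 2 * dotv u v.
Proof. rewrite dotvBl !dotvBr (dotvC v u); ring. Qed.

Lemma dotv_sqN u : dotv (- u) (- u) = dotv u u.
Proof. by rewrite dotvNl dotvC dotvNl opprK. Qed.

Lemma dist_sq (x y : 'rV[R]_n) : dist x y ^+ 2 = dotv (x - y) (x - y).
Proof. by rewrite /dist sqr_sqrtr // dotv_ge0. Qed.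

Lemma dist_ge0 (x y : 'rV[R]_n) : 0 <= dist x y.
Proof. exact: sqrtr_ge0. Qed.

Lemma maxdist_ge {m} (P : 'I_m -> 'rV[R]_n) Q i : dist (P i) Q <= maxdist P Q.
Proof. by rewrite /maxdist (bigD1 i) //= le_max lexx. Qed.

Lemma maxdist_le {m} (P : 'I_m -> 'rV[R]_n) Q b :
  0 <= b -> (forall i, dist (P i) Q <= b) -> maxdist P Q <= b.
Proof.
move=> b0 H; rewrite /maxdist; apply: (big_ind (fun x => x <= b)) => //.
by move=> x y hx hy; rewrite ge_max hx hy.
Qed.

Lemma maxdist_ge0 {m} (P : 'I_m -> 'rV[R]_n) Q : 0 <= maxdist P Q.
Proof.
rewrite /maxdist; apply: (big_ind (fun x => 0 <= x)) => //.
  by move=> x y hx hy; rewrite le_max hx.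
by move=> i _; exact: dist_ge0.
Qed.

End Dot.

Lemma lift0_cases (i : 'I_3) : lift ord0 i = p2 \/ lift ord0 i = p3 \/ lift ord0 i = p4.
Proof.
case: i => [[|[|[|k]]] Hk]; last by [].
- by left; apply: val_inj.
- by right; left; apply: val_inj.
- by right; right; apply: val_inj.
Qed.

Theorem theorem7 (R : realType) (n : nat) (P : 'I_4 -> 'rV[R]_n)
  (Q0 : 'rV[R]_n) (lam0 : 'I_4 -> R) (Q1 : 'rV[R]_n) (lam1 : 'I_4 -> R) :
  gen_pos P ->
  is_bary P lam0 Q0 ->
  (forall i j, dist (P i) Q0 = dist (P j) Q0) ->
  lam0 p1 < 0 -> 0 <= lam0 p2 -> 0 <= lam0 p3 -> 0 <= lam0 p4 ->
  is_proj (face1 P) Q0 Q1 ->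
  is_bary P lam1 Q1 ->
  0 <= lam1 p2 -> 0 <= lam1 p3 -> 0 <= lam1 p4 ->
  (forall Q, is_sec_center P Q <-> Q = Q1) /\ maxdist P Q1 = dist (P p2) Q1.
Proof.
move=> gp [s0 eQ0] eqd l01 _ _ _ [[mu [smu eQ1]] orth] [s1 eQ1'] h2 h3 h4.
have Hmu : forall i, mu i = lam1 (lift ord0 i).
  pose v : 'rV[R]_3 := \row_(i < 3) (lam1 (lift ord0 i) - mu i).
  have Hv : v *m (\matrix_(i < 3) (P (lift ord0 i) - P ord0)) = 0.
    rewrite mulmx_sum_row.
    under eq_bigr => i _ do rewrite rowK mxE scalerBr !scalerBl.
    rewrite !sumrB -!scaler_suml.
    rewrite big_ord_recl in eQ1'; rewrite big_ord_recl in s1.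
    rewrite /face1 in eQ1.
    rewrite -eQ1 smu.
    have -> : \sum_(i < 3) lam1 (lift ord0 i) *: P (lift ord0 i) = Q1 - lam1 ord0 *: P ord0.
      by rewrite eQ1' addrC addKr.
    have -> : \sum_(i < 3) lam1 (lift ord0 i) = 1 - lam1 ord0.
      by rewrite -s1 addrC addKr.
    rewrite scalerBl scale1r.
    by rewrite (addrAC Q1) subrr add0r (addrAC (P ord0)) subrr add0r subrr.
  have := row_free_inj gp (x1 := v) (x2 := 0); rewrite mul0mx => /(_ Hv) v0 i.
  move/rowP: v0 => /(_ i); rewrite !mxE => /eqP; rewrite subr_eq0 => /eqP ->.
  by [].
have mu0 : forall i, 0 <= mu i.
  by move=> i; rewrite Hmu; case: (lift0_cases i) => [->|[->|->]].
rewrite /face1 in eQ1 orth.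
set h := Q0 - Q1.
have orth' : forall i, dotv h (P (lift ord0 i) - Q1) = 0.
  move=> i; apply: orth; exists (fun j => (j == i)%:R); split.
    by rewrite (bigD1 i) //= eqxx big1 ?addr0 // => j /negPf ->.
  rewrite (bigD1 i) //= eqxx scale1r big1 ?addr0 // => j /negPf ->.
  by rewrite scale0r.
set r0 := dotv (P ord0 - Q0) (P ord0 - Q0).
have Er0 : forall i, dotv (P i - Q0) (P i - Q0) = r0.
  by move=> i; rewrite /r0 -!dist_sq (eqd i ord0).
set hh := dotv h h.
set r2 := r0 - hh.
have Eface : forall i, dotv (P (lift ord0 i) - Q1) (P (lift ord0 i) - Q1) = r2.
  move=> i; have := Er0 (lift ord0 i).
  have -> : P (lift ord0 i) - Q0 = (P (lift ord0 i) - Q1) - h.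
    by rewrite /h opprB addrA subrK.
  rewrite dotv_sqB (dotvC _ h) orth' /r2 => <-; rewrite /hh; ring.
set c := dotv h (P ord0 - Q1).
have Ehh : hh = lam0 ord0 * c.
  have Eh : h = \sum_(i < 4) lam0 i *: (P i - Q1).
    rewrite /h eQ0; under [RHS]eq_bigr => i _ do rewrite scalerBr.
    by rewrite sumrB -scaler_suml s0 scale1r.
  rewrite /hh {1}Eh dotv_suml big_ord_recl big1 ?addr0.
    by rewrite dotvZl dotvC.
  by move=> i _; rewrite dotvZl dotvC orth' mulr0.
have c0 : c <= 0.
  have hh0 : 0 <= hh by exact: dotv_ge0.
  have : lam0 ord0 < 0 by have -> : ord0 = p1 by apply: val_inj.
  nra.
have E0 : dotv (P ord0 - Q1) (P ord0 - Q1) <= r2.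
  have -> : P ord0 - Q1 = (P ord0 - Q0) + h by rewrite /h addrA subrK.
  have Ed : dotv (P ord0 - Q0) h = c - hh.
    have -> : P ord0 - Q0 = (P ord0 - Q1) - h by rewrite /h opprB addrA subrK.
    by rewrite dotvBl (dotvC _ h).
  rewrite dotv_sqD -/r0 -/hh Ed /r2; lra.
have Key : forall Q, r2 + dotv (Q - Q1) (Q - Q1) <= maxdist P Q ^+ 2.
  move=> Q.
  have E : \sum_(i<3) mu i * dotv (P (lift ord0 i) - Q) (P (lift ord0 i) - Q)
           = r2 + dotv (Q - Q1) (Q - Q1).
    have Z : \sum_(i<3) mu i *: (P (lift ord0 i) - Q1) = 0.
      under eq_bigr => i _ do rewrite scalerBr.
      by rewrite sumrB -scaler_suml smu scale1r -eQ1 subrr.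
    transitivity (\sum_(i<3) (mu i * r2 + mu i * dotv (Q - Q1) (Q - Q1)
                   + 2 * dotv (mu i *: (P (lift ord0 i) - Q1)) (Q1 - Q))).
      apply: eq_bigr => i _.
      have -> : P (lift ord0 i) - Q = (P (lift ord0 i) - Q1) + (Q1 - Q)
        by rewrite addrA subrK.
      rewrite dotv_sqD Eface dotvZl -(opprB Q Q1) dotv_sqN; ring.
    rewrite !big_split /= -!mulr_suml -mulr_sumr -dotv_suml Z dotv0l smu; ring.
  rewrite -E.
  have B : \sum_(i<3) mu i * dotv (P (lift ord0 i) - Q) (P (lift ord0 i) - Q)
           <= \sum_(i<3) mu i * maxdist P Q ^+ 2.
    apply: ler_sum => i _; apply: ler_wpM2l; first exact: mu0.
    have := maxdist_ge P Q (lift ord0 i); have := dist_ge0 (P (lift ord0 i)) Q.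
    rewrite -dist_sq; nra.
  by apply: le_trans B _; rewrite -mulr_suml smu mul1r.
have p2E : p2 = lift ord0 ord0 by apply: val_inj.
have D2 : dist (P p2) Q1 ^+ 2 = r2 by rewrite dist_sq p2E Eface.
have Emax : maxdist P Q1 = dist (P p2) Q1.
  apply/eqP; rewrite eq_le maxdist_ge andbT; apply: maxdist_le; first exact: dist_ge0.
  move=> i; rewrite /dist ler_sqrt ?dotv_ge0 // p2E.
  by case: (unliftP ord0 i) => [j ->|->]; [rewrite !Eface | rewrite Eface; exact: E0].
split => //; move=> Q; split.
  move=> HQ; have := HQ Q1; rewrite Emax => HQ'.
  have N0 := dotv_ge0 (Q - Q1); have M0 := maxdist_ge0 P Q.
  have d0 := dist_ge0 (P p2) Q1; have K := Key Q.
  apply/eqP; rewrite -subr_eq0; apply/eqP/dotv_eq0.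
  apply/eqP; rewrite eq_le N0 andbT; nra.
move=> -> Q'; rewrite Emax.
have N0 := dotv_ge0 (Q' - Q1); have M0 := maxdist_ge0 P Q'.
have d0 := dist_ge0 (P p2) Q1; have K := Key Q'.
nra.
Qed.
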